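(* For any two probability distributions $\pi_V,\pi'_V$ on $\mathbb V$ and any $1\le q\le\mathsf n$, \[\big|\log\mathbb P_{\pi_V}(X_q\mid X_{q+1:\mathsf n})-\log\mathbb P_{\pi'_V}(X_q\mid X_{q+1:\mathsf n})\big|\le2\sum_{\ell=0}^{\mathsf n+1-q}(\nu_q\nu_{q+\ell-1}\nu_{q+\ell})^{-1}\Big(\prod_{k=q+1}^{q+\ell-1}(1-\nu_k)\Big)\|\pi_V-\pi'_V\|_{\mathsf{tv}},\] for every realization of the observations (empty products equal $1$).
   Context: Let $\mathsf n\ge1$, $\mathbb V$ a measurable space, $\mathbb X$ a discrete set, and $K_i:\mathbb X\times\mathbb V^2\to[0,\infty)$ for $i\in\mathbb Z$, each $K_i(\cdot,v,w)$ a probability on $\mathbb X$. For a probability $\pi_V$ on $\mathbb V$, $\mathbb P_{\pi_V}$ is the law of $(V_{1:\mathsf n+1},X_{1:\mathsf n})$ with $V_i$ i.i.d. $\pi_V$ and, given $V$, $X_i$ independent with $\mathbb P(X_i=x\mid V)=K_i(x,V_i,V_{i+1})$; $\mathbb P_{\pi_V}(X_q\mid X_{q+1:\mathsf n})$ is the conditional probability of the observed value of $X_q$ given the observed $X_{q+1:\mathsf n}$. Assumption H2: there exist $\nu_i>0$ ($i\in\mathbb Z$) with $\nu_i\le K_i(x,v,w)\le1$ for all $x,i,v,w$. $\|\xi\|_{\mathsf{tv}}=\sup\{\int f\,d\xi:\|f\|_\infty=1\}$. *)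

(* Defs.v *)
From HB Require Import structures.
From mathcomp Require Import all_boot all_order all_algebra.
From mathcomp Require Import all_classical all_reals all_analysis.
Set Implicit Arguments. Unset Strict Implicit. Unset Printing Implicit Defensive.
Import Order.TTheory GRing.Theory Num.Theory.
Local Open Scope classical_set_scope.
Local Open Scope ring_scope.

(* Conventions: indices are natural numbers; V_i lives at coordinate i of a
   sequence v : nat -> V, X_i is x i for x : nat -> X (i = 1..n). *)

Definition upd (V : Type) (v : nat -> V) (k : nat) (w : V) : nat -> V :=
  fun i => if i == k then w else v i.

Fixpoint iint d (V : measurableType d) (R : realType) (pi : probability V R)
    (k : nat) (F : (nat -> V) -> \bar R) (v : nat -> V) : \bar R :=
  match k with
  | 0 => F v
  | k'.+1 => (\int[pi]_w iint pi k' F (upd v k w))%E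
  end.

(* P_pi(X_{1:n} = x_{1:n}) = E[ prod_{i=1}^n K_i(x_i, V_i, V_{i+1}) ],
   V_1..V_{n+1} i.i.d. pi *)
Definition jointP d (V : measurableType d) (R : realType) (X : finType)
    (pi : probability V R) (n : nat) (K : nat -> X -> V -> V -> R)
    (x : nat -> X) : \bar R :=
  iint pi n.+1
    (fun v => (\prod_(1 <= i < n.+1) K i (x i) (v i) (v i.+1))%:E)
    (fun _ => point).

Definition ext (X : Type) (n : nat) (obs : nat -> X) (y : {ffun 'I_n -> X})
    (i : nat) : X :=
  if i is j.+1 then
    (if (insub j : option 'I_n) is Some k then y k else obs i)
  else obs i.

(* P_pi(X_{a:n} = obs_{a:n}) : marginal, summing over X_1..X_{a-1} *)
Definition margP d (V : measurableType d) (R : realType) (X : finType)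
    (pi : probability V R) (n : nat) (K : nat -> X -> V -> V -> R)
    (obs : nat -> X) (a : nat) : \bar R :=
  (\sum_(y : {ffun 'I_n -> X} |
          [forall k : 'I_n, (a <= k.+1)%N ==> (y k == obs k.+1)])
     jointP pi n K (ext obs y))%E.

Definition condP d (V : measurableType d) (R : realType) (X : finType)
    (pi : probability V R) (n : nat) (K : nat -> X -> V -> V -> R)
    (obs : nat -> X) (q : nat) : R :=
  fine (margP pi n K obs q) / fine (margP pi n K obs q.+1).

Definition tvnorm d (V : measurableType d) (R : realType)
    (pi pi' : probability V R) : \bar R :=
  ereal_sup [set (\int[pi]_x (f x)%:E - \int[pi']_x (f x)%:E)%E
            | f in [set f : V -> R | measurable_fun setT f /\
                     (forall x, `|f x| <= 1) /\
                     sup (range (fun x => `|f x|)) = 1]].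

(* Main.v *)
Require Import Defs.
From HB Require Import structures.
From mathcomp Require Import all_boot all_order all_algebra.
From mathcomp Require Import all_classical all_reals all_analysis.
From mathcomp Require Import measurable_realfun.
From mathcomp Require Import ring lra.
Import Order.TTheory GRing.Theory Num.Theory.
Local Open Scope classical_set_scope.
Local Open Scope ring_scope.

Section Infra.
Context {d : measure_display} {V : measurableType d} {R : realType}.
Implicit Types (P : probability V R).

Definition RI P (f : V -> R) : R := (\int[P]_x f x)%R.

Definition bm (f : V -> R) := measurable_fun setT f /\ exists M, forall x, `|f x| <= M.

Lemma bm_int P f : bm f -> P.-integrable setT (EFin \o f).
Proof.
move=> [mf [M hM]]; apply: measurable_bounded_integrable => //.
  by rewrite /= probability_setT ltry.
exists M; split; first exact: num_real.
by move=> y My x _; apply: le_trans (hM x) (ltW My).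
Qed.

Lemma int_EFin P f : bm f -> (\int[P]_x (f x)%:E)%E = (RI P f)%:E.
Proof. by move=> bf; rewrite /RI /Rintegral fineK // integrable_fin_num // bm_int. Qed.

Lemma bm_cst c : bm (fun _ => c).
Proof. by split; [exact: measurable_cst | exists `|c|]. Qed.

Lemma bmD f g : bm f -> bm g -> bm (fun x => f x + g x).
Proof.
move=> [mf [M hM]] [mg [N hN]]; split; first exact: measurable_realfun.measurable_funD.
by exists (M + N) => x; apply: le_trans (ler_normD _ _) (lerD (hM x) (hN x)).
Qed.

Lemma bmM f g : bm f -> bm g -> bm (fun x => f x * g x).
Proof.
move=> [mf [M hM]] [mg [N hN]]; split; first exact: measurable_realfun.measurable_funM.
exists (M * N) => x; rewrite normrM; apply: ler_pM => //.
Qed.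

Lemma bmN f : bm f -> bm (fun x => - f x).
Proof.
move=> [mf [M hM]]; split; first exact: measurableT_comp.
by exists M => x; rewrite normrN.
Qed.

Lemma bmB f g : bm f -> bm g -> bm (fun x => f x - g x).
Proof. by move=> bf bg; apply: bmD => //; apply: bmN. Qed.

Lemma RID P f g : bm f -> bm g -> RI P (fun x => f x + g x) = RI P f + RI P g.
Proof. by move=> bf bg; rewrite /RI RintegralD // bm_int. Qed.

Lemma RIB P f g : bm f -> bm g -> RI P (fun x => f x - g x) = RI P f - RI P g.
Proof. by move=> bf bg; rewrite /RI RintegralB // bm_int. Qed.

Lemma RIZl P c f : bm f -> RI P (fun x => c * f x) = c * RI P f.
Proof. by move=> bf; rewrite /RI RintegralZl // bm_int. Qed.

Lemma RIZr P c f : bm f -> RI P (fun x => f x * c) = RI P f * c.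
Proof. by move=> bf; rewrite /RI RintegralZr // bm_int. Qed.

Lemma RI_le P f g : bm f -> bm g -> (forall x, f x <= g x) -> RI P f <= RI P g.
Proof. by move=> bf bg fg; rewrite /RI le_Rintegral // ?bm_int. Qed.

Lemma RI_cst P c : RI P (fun _ => c) = c.
Proof. by rewrite /RI Rintegral_cst //= probability_setT /= mulr1. Qed.

Lemma RI_ext P f g : (forall x, f x = g x) -> RI P f = RI P g.
Proof. by move=> fg; congr RI; apply: funext. Qed.

Lemma RI_ge0 P f : (forall x, 0 <= f x) -> 0 <= RI P f.
Proof. by move=> f0; rewrite /RI Rintegral_ge0. Qed.

Lemma RI_lb P f c : bm f -> (forall x, c <= f x) -> c <= RI P f.
Proof. by move=> bf cf; rewrite -(RI_cst P c); apply: RI_le => //; apply: bm_cst. Qed.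

Lemma RI_ub P f c : bm f -> (forall x, f x <= c) -> RI P f <= c.
Proof. by move=> bf cf; rewrite -(RI_cst P c); apply: RI_le => //; apply: bm_cst. Qed.

Lemma bm_sum (I : Type) (s : seq I) (p : pred I) (F : I -> V -> R) :
  (forall i, p i -> bm (F i)) -> bm (fun x => \sum_(i <- s | p i) F i x).
Proof.
move=> bF; elim: s => [|a s IH].
  have -> : (fun x => \sum_(i <- [::] | p i) F i x) = fun _ => 0.
    by apply: funext => x; rewrite big_nil.
  exact: bm_cst.
have -> : (fun x => \sum_(i <- a :: s | p i) F i x) =
  fun x => if p a then F a x + \sum_(i <- s | p i) F i x else \sum_(i <- s | p i) F i x.
  by apply: funext => x; rewrite big_cons.
case pa: (p a); last by [].
by apply: bmD => //; apply: bF.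
Qed.

Lemma RI_sum P (I : Type) (s : seq I) (p : pred I) (F : I -> V -> R) :
  (forall i, p i -> bm (F i)) ->
  RI P (fun x => \sum_(i <- s | p i) F i x) = \sum_(i <- s | p i) RI P (F i).
Proof.
move=> bF; elim: s => [|a s IH].
  rewrite big_nil; transitivity (RI P (fun _ => 0)); last exact: RI_cst.
  by apply: RI_ext => x; rewrite big_nil.
rewrite (@RI_ext P _ (fun x => if p a then F a x + \sum_(i <- s | p i) F i x else \sum_(i <- s | p i) F i x)); last by move=> x; rewrite big_cons.
rewrite big_cons; case pa: (p a); last by [].
by rewrite RID ?IH //; [apply: bF | apply: bm_sum].
Qed.

Definition bm2 (h : V * V -> R) :=
  measurable_fun setT h /\ (forall z, 0 <= h z) /\ exists M, forall z, h z <= M.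

Lemma bm2_sec1 h w : bm2 h -> bm (fun u => h (u, w)).
Proof.
move=> [mh [h0 [M hM]]]; split; first exact: measurable_fun_pair1.
by exists M => u; rewrite ger0_norm.
Qed.

Lemma bm2_sec2 h u : bm2 h -> bm (fun w => h (u, w)).
Proof.
move=> [mh [h0 [M hM]]]; split; first exact: measurable_fun_pair2.
by exists M => w; rewrite ger0_norm.
Qed.

Lemma mRI2 P h : bm2 h -> measurable_fun setT (fun w => RI P (fun u => h (u, w))).
Proof.
move=> bh; have [mh [h0 _]] := bh.
apply/measurable_EFinP.
have -> : (EFin \o (fun w => RI P (fun u => h (u, w)))) =
    fubini_G P (EFin \o h).
  by apply: funext => w /=; rewrite /fubini_G -int_EFin //; apply: bm2_sec1.
apply: (@measurable_fun_fubini_tonelli_G _ _ _ _ _ P (EFin \o h)).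
  exact/measurable_EFinP.
by move=> z /=; rewrite lee_fin.
Qed.

Lemma mRI1 P h : bm2 h -> measurable_fun setT (fun u => RI P (fun w => h (u, w))).
Proof.
move=> bh; have [mh [h0 _]] := bh.
apply/measurable_EFinP.
have -> : (EFin \o (fun u => RI P (fun w => h (u, w)))) =
    fubini_F P (EFin \o h).
  by apply: funext => u /=; rewrite /fubini_F -int_EFin //; apply: bm2_sec2.
apply: (@measurable_fun_fubini_tonelli_F _ _ _ _ _ P (EFin \o h)).
  exact/measurable_EFinP.
by move=> z /=; rewrite lee_fin.
Qed.

Lemma bm_RI2 P h : bm2 h -> bm (fun w => RI P (fun u => h (u, w))).
Proof.
move=> bh; split; first exact: mRI2.
have [_ [h0 [M hM]]] := bh.
exists M => w; rewrite ger0_norm; last by apply: RI_ge0.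
by apply: RI_ub => //; apply: bm2_sec1.
Qed.

Lemma bm_RI1 P h : bm2 h -> bm (fun u => RI P (fun w => h (u, w))).
Proof.
move=> bh; split; first exact: mRI1.
have [_ [h0 [M hM]]] := bh.
exists M => w; rewrite ger0_norm; last by apply: RI_ge0.
by apply: RI_ub => //; apply: bm2_sec2.
Qed.

Lemma RI_fubini P1 P2 h : bm2 h ->
  RI P1 (fun u => RI P2 (fun w => h (u, w))) =
  RI P2 (fun w => RI P1 (fun u => h (u, w))).
Proof.
move=> bh; have [mh [h0 _]] := bh.
have := @fubini_tonelli _ _ _ _ _ P1 P2 (EFin \o h).
move=> /(_ _ _).
have mh' : measurable_fun setT (EFin \o h) by exact/measurable_EFinP.
have h0' : forall z, (0 <= (EFin \o h) z)%E by move=> z /=; rewrite lee_fin.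
move=> /(_ mh' h0') E.
apply: EFin_inj; rewrite -!int_EFin; [|exact: bm_RI2|exact: bm_RI1].
rewrite (eq_integral (fun u => \int[P2]_w (EFin \o h) (u, w))%E); last first.
  by move=> u _; rewrite -int_EFin //; apply: bm2_sec2.
by rewrite E; apply: eq_integral => w _; rewrite -int_EFin //; apply: bm2_sec1.
Qed.


Lemma RI_abs_le P f g : bm f -> bm g -> (forall x, `|f x| <= g x) -> `|RI P f| <= RI P g.
Proof.
move=> bf bg fg.
have hN : RI P (fun x => - g x) = - RI P g.
  transitivity (RI P (fun x => -1 * g x)); first by apply: RI_ext => x; rewrite mulN1r.
  by rewrite RIZl // mulN1r.
rewrite ler_norml; apply/andP; split.
  rewrite -hN; apply: RI_le => [||x]; [exact: bmN | exact: bf |].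
  by have := fg x; rewrite ler_norml => /andP[].
by apply: RI_le => // x; have := fg x; rewrite ler_norml => /andP[].
Qed.

End Infra.

Section TV.
Context {d : measure_display} {V : measurableType d} {R : realType}.
Implicit Types (P : probability V R).

Lemma tv_ge0 P P' : (0 <= tvnorm P P')%E.
Proof.
rewrite /tvnorm; apply: ereal_sup_ubound => /=.
exists (fun _ => 1); last first.
  by rewrite !int_EFin ?RI_cst ?subee //; apply: bm_cst.
split; first exact: measurable_cst.
split; first by move=> _; rewrite normr1.
have -> : range (fun _ : V => `|1 : R|) = [set 1].
  apply/seteqP; split => [y [x _ <-]|y ->]; first by rewrite normr1.
  by exists point => //; rewrite normr1.
exact: sup1.
Qed.

Lemma tv_bound P P' t (phi : V -> R) C :
  tvnorm P P' = t%:E -> measurable_fun setT phi -> (forall x, `|phi x| <= C) ->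
  RI P phi - RI P' phi <= C * t.
Proof.
move=> tvE mphi phiC.
have t0 : 0 <= t by rewrite -lee_fin -tvE tv_ge0.
have C0 : 0 <= C by apply: le_trans (phiC point).
set S := range (fun x => `|phi x|).
have S0 : S !=set0 by exists `|phi point|, point.
have Sub : has_ubound S by exists C => _ [x _ <-].
set s := sup S.
have phis : forall x, `|phi x| <= s.
  by move=> x; apply: ub_le_sup => //; exists x.
have sC : s <= C by apply: ge_sup => // _ [x _ <-].
have s0 : 0 <= s by apply: le_trans (phis point).
have bphi : bm phi by split => //; exists C.
case: (eqVneq s 0) => [sE|sn0].
  have phi0 : forall x, phi x = 0.
    by move=> x; apply/normr0_eq0/eqP; rewrite eq_le normr_ge0 andbT -sE phis.
  rewrite (@RI_ext _ _ _ P phi (fun _ => 0)) // (@RI_ext _ _ _ P' phi (fun _ => 0)) //.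
  by rewrite !RI_cst subrr mulr_ge0.
have sp : 0 < s by rewrite lt_neqAle eq_sym sn0 s0.
pose f := fun x => phi x / s.
have bf : bm f.
  split; first by apply: measurable_funM => //; exact: measurable_cst.
  have si : 0 < s^-1 by rewrite invr_gt0.
  by exists (C / s) => x; rewrite /f normrM (gtr0_norm si) ler_pM2r.
have f1 : forall x, `|f x| <= 1.
  by move=> x; rewrite /f normrM (gtr0_norm (_ : 0 < s^-1)) ?invr_gt0 // ler_pdivrMr // mul1r.
have supf : sup (range (fun x => `|f x|)) = 1.
  have Sf0 : range (fun x => `|f x|) !=set0 by exists `|f point|, point.
  have Sfub : has_ubound (range (fun x => `|f x|)) by exists 1 => _ [x _ <-].
  apply/eqP; rewrite eq_le; apply/andP; split.
    by apply: ge_sup => // _ [x _ <-].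
  have : s <= sup (range (fun x => `|f x|)) * s.
    apply: ge_sup => // _ [x _ <-].
    have -> : `|phi x| = `|f x| * s.
      by rewrite /f normrM (gtr0_norm (_ : 0 < s^-1)) ?invr_gt0 // -mulrA mulVf ?mulr1.
    by rewrite ler_pM2r //; apply: ub_le_sup => //; exists x.
  by rewrite ler_pMl.
have key : (\int[P]_x (f x)%:E - \int[P']_x (f x)%:E <= tvnorm P P')%E.
  rewrite /tvnorm; apply: ereal_sup_ubound => /=.
  by exists f => //; split; [case: bf | split].
move: key; rewrite !int_EFin // tvE -EFinB lee_fin => key.
have -> : RI P phi = s * RI P f.
  by rewrite -RIZl //; apply: RI_ext => x; rewrite /f mulrCA mulfV ?mulr1.
have -> : RI P' phi = s * RI P' f.
  by rewrite -RIZl //; apply: RI_ext => x; rewrite /f mulrCA mulfV ?mulr1.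
rewrite -mulrBr; have [dn|dp] := lerP (RI P f - RI P' f) 0.
  by apply: le_trans (mulr_ge0 C0 t0); rewrite mulr_ge0_le0.
by apply: ler_pM => //; apply: ltW.
Qed.


Lemma RIN P f : bm f -> RI P (fun x => - f x) = - RI P f.
Proof.
move=> bf; transitivity (RI P (fun x => -1 * f x)); first by apply: RI_ext => x; rewrite mulN1r.
by rewrite RIZl // mulN1r.
Qed.

Lemma tv_abs P P' t (phi : V -> R) C :
  tvnorm P P' = t%:E -> measurable_fun setT phi -> (forall x, `|phi x| <= C) ->
  `|RI P phi - RI P' phi| <= C * t.
Proof.
move=> tvE mphi phiC; have bphi : bm phi by split => //; exists C.
rewrite ler_norml; apply/andP; split; last exact: tv_bound.
have mN : measurable_fun setT (fun x => - phi x) by case: (bmN _ bphi).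
have hN : forall x, `|- phi x| <= C by move=> x; rewrite normrN.
have := @tv_bound P P' t (fun x => - phi x) C tvE mN hN.
by rewrite !RIN // => h; lra.
Qed.

Lemma ln_lip (a b e : R) : 0 < e -> e <= a -> e <= b -> `|ln a - ln b| <= `|a - b| / e.
Proof.
move=> e0 ea eb.
have a0 : 0 < a by apply: lt_le_trans ea.
have b0 : 0 < b by apply: lt_le_trans eb.
have key : forall x y, e <= x -> e <= y -> 0 < x -> 0 < y -> ln x - ln y <= `|x - y| / e.
  move=> x y ex ey x0 y0.
  rewrite -ln_div ?posrE //.
  have E : x / y = 1 + (x / y - 1) by rewrite addrC subrK.
  rewrite E; apply: le_trans (le_ln1Dx _) _.
    by have := divr_gt0 x0 y0; lra.
  have -> : x / y - 1 = (x - y) / y by rewrite mulrBl divff ?gt_eqF.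
  apply: (@le_trans _ _ (`|x - y| / y)).
    by apply: ler_wpM2r; [rewrite invr_ge0 ltW | exact: ler_norm].
  by rewrite ler_wpM2l // lef_pV2 ?posrE.
rewrite ler_norml; apply/andP; split; last exact: key.
by rewrite lerNl opprB distrC; exact: key.
Qed.

End TV.

Section Disc.
Context {d : measure_display} {V : measurableType d} {R : realType}.
Context {X : finType} (K : nat -> X -> V -> V -> R).
Hypothesis Kmeas : forall i x, measurable_fun setT (fun p : V * V => K i x p.1 p.2).
Hypothesis K0 : forall i x v w, 0 <= K i x v w.
Hypothesis K1 : forall i x v w, K i x v w <= 1.
Hypothesis Kprob : forall i v w, \sum_(x : X) K i x v w = 1.

Definition good (f : V -> R) := measurable_fun setT f /\ forall v, 0 <= f v <= 1.

Lemma good_bm {f} : good f -> bm f.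
Proof.
by move=> [mf f01]; split => //; exists 1 => v; have /andP[a b] := f01 v; rewrite ger0_norm.
Qed.

Lemma bmK1 i x w : bm (fun u => K i x u w).
Proof.
split; first by have := measurable_fun_pair1 w (Kmeas i x).
by exists 1 => u; rewrite ger0_norm.
Qed.

Lemma bmK2 i x v : bm (fun w => K i x v w).
Proof.
split; first by have := measurable_fun_pair2 v (Kmeas i x).
by exists 1 => u; rewrite ger0_norm.
Qed.

Lemma good1 : good (fun _ => 1).
Proof. by split; [exact: measurable_cst | move=> _; rewrite ler01 lexx]. Qed.

Lemma good_RIK (P : probability V R) f i x : good f ->
  good (fun w => RI P (fun u => f u * K i x u w)).
Proof.
move=> [mf f01].
have bh : bm2 (fun z : V * V => f z.1 * K i x z.1 z.2).
  split.
    apply: measurable_funM => //; first exact: measurableT_comp.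
  split.
    by move=> z; apply: mulr_ge0 => //; case/andP: (f01 z.1).
  exists 1 => z; rewrite -(mulr1 1); apply: ler_pM => //; by case/andP: (f01 z.1).
split; first by have := mRI2 P _ bh.
move=> w; apply/andP; split.
  by apply: RI_ge0 => u; apply: mulr_ge0 => //; case/andP: (f01 u).
apply: RI_ub; first exact: (bm2_sec1 _ w bh).
by move=> u; rewrite -(mulr1 1); apply: ler_pM => //; case/andP: (f01 u).
Qed.

Lemma good_RIKb (P : probability V R) g i x : good g ->
  good (fun v => RI P (fun w => K i x v w * g w)).
Proof.
move=> [mg g01].
have bh : bm2 (fun z : V * V => K i x z.1 z.2 * g z.2).
  split.
    apply: measurable_funM => //; exact: measurableT_comp.
  split.
    by move=> z; apply: mulr_ge0 => //; case/andP: (g01 z.2).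
  exists 1 => z; rewrite -(mulr1 1); apply: ler_pM => //; by case/andP: (g01 z.2).
split; first by have := mRI1 P _ bh.
move=> v; apply/andP; split.
  by apply: RI_ge0 => u; apply: mulr_ge0 => //; case/andP: (g01 u).
apply: RI_ub; first exact: (bm2_sec2 _ v bh).
by move=> u; rewrite -(mulr1 1); apply: ler_pM => //; case/andP: (g01 u).
Qed.

Fixpoint fw (P : probability V R) (x : nat -> X) (k : nat) : V -> R :=
  match k with
  | 0 => fun _ => 1
  | k'.+1 => fun w => RI P (fun u => fw P x k' u * K k'.+1 (x k'.+1) u w)
  end.

Lemma good_fw P x k : good (fw P x k).
Proof. elim: k => [|k IH] /=; [exact: good1 | exact: good_RIK]. Qed.

Lemma iint_fw (P : probability V R) (n : nat) (x : nat -> X) k : (k <= n)%N ->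
  forall v, iint P k (fun v => (\prod_(1 <= i < n.+1) K i (x i) (v i) (v i.+1))%:E) v
   = (fw P x k (v k.+1) * \prod_(k.+1 <= i < n.+1) K i (x i) (v i) (v i.+1))%:E.
Proof.
elim: k => [|k IH] kn v /=; first by rewrite mul1r.
rewrite (eq_integral (fun w => ((fw P x k w * K k.+1 (x k.+1) w (v k.+2)) *
    \prod_(k.+2 <= i < n.+1) K i (x i) (v i) (v i.+1))%:E)); last first.
  move=> w _; rewrite IH 1?ltnW // /upd eqxx big_ltn ?ltnS //.
  rewrite eqxx (gtn_eqF (ltnSn k.+1)) mulrA; congr (_ * _)%:E.
  apply: eq_big_nat => i /andP[ki _].
  rewrite ifF; last by apply/negbTE; rewrite neq_ltn ki orbT.
  by rewrite ifF // eqSS; apply/negbTE; rewrite neq_ltn (ltnW ki) orbT.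
have bfk : bm (fun u => fw P x k u * K k.+1 (x k.+1) u (v k.+2)).
  by apply: bmM; [exact/good_bm/good_fw | exact: bmK1].
rewrite int_EFin ?RIZr //.
by apply: bmM => //; exact: bm_cst.
Qed.


Lemma jointP_fw P n x : jointP P n K x = (RI P (fw P x n))%:E.
Proof.
rewrite /jointP /=.
rewrite (eq_integral (fun w => (fw P x n w)%:E)); last first.
  by move=> w _; rewrite iint_fw // /upd eqxx big_geq // mulr1.
by rewrite int_EFin //; exact/good_bm/good_fw.
Qed.

Lemma ext_S n obs (z : {ffun 'I_n -> X}) k (hk : (k < n)%N) :
  ext obs z k.+1 = z (Ordinal hk).
Proof. by rewrite /ext insubT. Qed.

Section Marg.
Variables (n : nat) (obs : nat -> X) (a : nat).

Fixpoint bw (P : probability V R) (k : nat) : V -> R :=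
  match k with
  | 0 => fun _ => 1
  | k'.+1 => if (k'.+1 < a)%N then fun _ => 1
             else fun w => RI P (fun u => bw P k' u * K k'.+1 (obs k'.+1) u w)
  end.

Lemma good_bw P k : good (bw P k).
Proof. elim: k => [|k IH] /=; [exact: good1 | case: ifP => _; [exact: good1| exact: good_RIK]]. Qed.

Lemma bw_lt P k : (k < a)%N -> bw P k = fun _ => 1.
Proof. by case: k => [|k] //= ->. Qed.

Definition Zk k (y z : {ffun 'I_n -> X}) :=
  [forall i : 'I_n, ((i < k)%N && (i.+1 < a)%N) || (z i == y i)].

Definition updf (y : {ffun 'I_n -> X}) (o : 'I_n) (x : X) : {ffun 'I_n -> X} :=
  [ffun i => if i == o then x else y i].


Lemma Zk_part k (kn : (k < n)%N) (y : {ffun 'I_n -> X}) (G : {ffun 'I_n -> X} -> X -> R) :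
  (k.+1 < a)%N ->
  \sum_(z | Zk k.+1 y z) G z (z (Ordinal kn)) =
  \sum_x \sum_(z | Zk k (updf y (Ordinal kn) x) z) G z x.
Proof.
move=> ha; set o := Ordinal kn; symmetry.
under eq_bigr do rewrite big_mkcond.
rewrite exchange_big /= [RHS]big_mkcond; apply: eq_bigr => z _.
rewrite (bigD1 (z o)) //= big1 ?addr0; last first.
  move=> x hx; rewrite ifF //; apply/negbTE/negP => /forallP /(_ o).
  by rewrite ltnn /= ffunE eqxx => /eqP zx; rewrite zx eqxx in hx.
congr (if _ then _ else _); rewrite /Zk; apply: eq_forallb => i.
rewrite ffunE; case: (eqVneq i o) => [->|ne].
  by rewrite eqxx ltnn /= ltnSn ha.
have ik : (i : nat) != k by apply: contra ne => /eqP ik; apply/eqP/val_inj.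
by rewrite ltnS [(i <= k)%N]leq_eqVlt (negbTE ik).
Qed.

Lemma sum_fw P k : (k <= n)%N -> forall y : {ffun 'I_n -> X},
  (forall i : 'I_n, (a <= i.+1)%N -> y i = obs i.+1) ->
  forall w, \sum_(z | Zk k y z) fw P (ext obs z) k w = bw P k w.
Proof.
elim: k => [|k IH] kn y hy w.
  rewrite (eq_bigl (pred1 y)) ?big_pred1_eq // => z /=.
  apply/forallP/eqP => [H|->]; last by move=> i; rewrite eqxx orbT.
  by apply/ffunP => i; have := H i; rewrite /= => /eqP.
have kn' : (k < n)%N := kn.
set o := Ordinal kn'.
have bfk : forall (z : {ffun 'I_n -> X}) (x : X), bm (fun u => fw P (ext obs z) k u * K k.+1 x u w).
  by move=> z x; apply: bmM; [exact/good_bm/good_fw | exact: bmK1].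
transitivity (\sum_(z | Zk k.+1 y z) RI P (fun u => fw P (ext obs z) k u * K k.+1 (z o) u w)).
  by apply: eq_bigr => z _; rewrite -(ext_S _ obs z _ kn').
case: (ltnP k.+1 a) => ha.
  rewrite (bw_lt P _ ha) (Zk_part _ kn' y (fun z x => RI P (fun u => fw P (ext obs z) k u * K k.+1 x u w))) //.
  transitivity (\sum_x RI P (fun u => bw P k u * K k.+1 x u w)).
    apply: eq_bigr => x _; rewrite -RI_sum; last by move=> z _; apply: bfk.
    apply: RI_ext => u; rewrite -mulr_suml IH ?(ltnW kn) //.
    move=> i hi; rewrite ffunE; case: eqP => [io|_]; last exact: hy.
    by move: hi; rewrite io /= leqNgt ha.
  rewrite (bw_lt P _ (ltnW ha)) -RI_sum; last by move=> x _; apply: bmM; [exact: bm_cst | exact: bmK1].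
  transitivity (RI P (fun _ => 1)); last exact: RI_cst.
  by apply: RI_ext => u; rewrite -mulr_sumr Kprob mulr1.
rewrite /= ltnNge ha /=.
rewrite (eq_bigl (Zk k y)); last first.
  move=> z; rewrite /Zk; apply: eq_forallb => i.
  case: (eqVneq (i : nat) k) => [->|ik].
    by rewrite ltnn ltnSn /= ltnNge ha.
  by rewrite ltnS leq_eqVlt (negbTE ik).
transitivity (\sum_(z | Zk k y z) RI P (fun u => fw P (ext obs z) k u * K k.+1 (obs k.+1) u w)).
  apply: eq_bigr => z /forallP /(_ o); rewrite ltnn /= => /eqP ->.
  by rewrite (hy o ha).
rewrite -RI_sum; last by move=> z _; apply: bfk.
by apply: RI_ext => u; rewrite -mulr_suml IH ?(ltnW kn).
Qed.

End Marg.

Lemma margP_bw P n obs a : margP P n K obs a = (RI P (bw obs a P n))%:E.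
Proof.
rewrite /margP; under eq_bigr do rewrite jointP_fw.
rewrite sumEFin; congr EFin.
rewrite -RI_sum; last by move=> z _; exact/good_bm/good_fw.
apply: RI_ext => w.
rewrite -(@sum_fw n obs a P n (leqnn n) [ffun i : 'I_n => obs i.+1]); last by move=> i _; rewrite ffunE.
apply: eq_bigl => z; rewrite /Zk; apply: eq_forallb => i.
by rewrite ffunE ltn_ord /= implybE -ltnNge.
Qed.


Fixpoint gw (P : probability V R) (obs : nat -> X) (m k : nat) : V -> R :=
  match m with
  | 0 => fun _ => 1
  | m'.+1 => fun v => RI P (fun w => K k.+1 (obs k.+1) v w * gw P obs m' k.+1 w)
  end.

Lemma good_gw P obs m k : good (gw P obs m k).
Proof. elim: m k => [|m IH] k /=; [exact: good1 | exact: good_RIKb]. Qed.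

Lemma gw_S P obs n k : (k < n)%N ->
  gw P obs (n - k) k = fun v => RI P (fun w => K k.+1 (obs k.+1) v w * gw P obs (n - k.+1) k.+1 w).
Proof. by move=> kn; rewrite -subnSK. Qed.

Lemma bw_S P obs a k : (a <= k.+1)%N ->
  bw obs a P k.+1 = fun w => RI P (fun u => bw obs a P k u * K k.+1 (obs k.+1) u w).
Proof. by move=> ak /=; rewrite ltnNge ak. Qed.

Lemma fub_step P1 P2 f g i x : good f -> good g ->
  RI P1 (fun v => f v * RI P2 (fun w => K i x v w * g w)) =
  RI P2 (fun w => RI P1 (fun u => f u * K i x u w) * g w).
Proof.
move=> [mf f01] [mg g01].
have bh : bm2 (fun z : V * V => f z.1 * K i x z.1 z.2 * g z.2).
  split.
    apply: measurable_funM; last exact: measurableT_comp.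
    apply: measurable_funM => //; exact: measurableT_comp.
  split.
    move=> z; apply: mulr_ge0; last by case/andP: (g01 z.2).
    by apply: mulr_ge0 => //; case/andP: (f01 z.1).
  exists 1 => z; rewrite -(mulr1 1) -(mulr1 (1 * 1)).
  have /andP[? ?] := f01 z.1; have /andP[? ?] := g01 z.2.
  by apply: ler_pM => //; [apply: mulr_ge0 | apply: ler_pM].
transitivity (RI P1 (fun u => RI P2 (fun w => f u * K i x u w * g w))).
  apply: RI_ext => v; rewrite -RIZl; first by apply: RI_ext => w; rewrite mulrA.
  by apply: bmM; [exact: bmK2 | exact: good_bm].
rewrite (RI_fubini P1 P2 _ bh).
apply: RI_ext => w; rewrite -RIZr //.
by apply: bmM; [exact: good_bm | exact: bmK1].
Qed.

Lemma hyb_step P1 P2 obs n a k : (a <= k.+1)%N -> (k < n)%N ->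
  RI P1 (fun v => bw obs a P1 k v * gw P2 obs (n - k) k v) =
  RI P2 (fun w => bw obs a P1 k.+1 w * gw P2 obs (n - k.+1) k.+1 w).
Proof.
move=> ak kn; rewrite gw_S // bw_S // fub_step //; [exact: good_bw | exact: good_gw].
Qed.

Variable nu : nat -> R.
Hypothesis nu_pos : forall i, 0 < nu i.
Hypothesis Knu : forall i x v w, nu i <= K i x v w.

Lemma nu_le1 i : nu i <= 1.
Proof.
case: (pickP (@predT X)) => [x0 _|h]; first exact: le_trans (Knu i x0 point point) (K1 _ _ _ _).
have := Kprob i point point; rewrite big_pred0 // => /eqP; by rewrite eq_sym oner_eq0.
Qed.

Lemma fwd_bounds P f i x w : good f ->
  nu i * RI P f <= RI P (fun u => f u * K i x u w) <= RI P f.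
Proof.
move=> gf; have bf := good_bm gf; have [_ f01] := gf.
have bfK : bm (fun u => f u * K i x u w) by apply: bmM => //; exact: bmK1.
apply/andP; split.
  rewrite -RIZl //; apply: RI_le => //; first exact: bmM (bm_cst _) bf.
  by move=> u; rewrite mulrC ler_wpM2l //; case/andP: (f01 u).
apply: RI_le => // u; rewrite -[X in _ <= X]mulr1 ler_wpM2l //.
by case/andP: (f01 u).
Qed.

Lemma bwd_bounds P g i x v : good g ->
  nu i * RI P g <= RI P (fun w => K i x v w * g w) <= RI P g.
Proof.
move=> gg; have bg := good_bm gg; have [_ g01] := gg.
have bKg : bm (fun w => K i x v w * g w) by apply: bmM => //; exact: bmK2.
apply/andP; split.
  rewrite -RIZl //; apply: RI_le => //; first exact: bmM (bm_cst _) bg.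
  by move=> u; rewrite ler_wpM2r //; case/andP: (g01 u).
apply: RI_le => // u; rewrite -[X in _ <= X]mul1r ler_wpM2r //.
by case/andP: (g01 u).
Qed.

Lemma gw_bounds P obs m k : exists T, 0 < T /\ forall v, nu k.+1 * T <= gw P obs m k v <= T.
Proof.
elim: m k => [|m IH] k /=.
  by exists 1; split => // v; rewrite mulr1 nu_le1 lexx.
have [T [T0 hT]] := IH k.+1.
exists (RI P (gw P obs m k.+1)); split; last by move=> v; apply: bwd_bounds; exact: good_gw.
apply: lt_le_trans (RI_lb P _ _ (good_bm (good_gw P obs m k.+1)) (fun v => proj1 (andP (hT v)))).
by rewrite mulr_gt0.
Qed.

Lemma bw_bounds P obs q k : (q <= k)%N ->
  exists S, 0 < S /\ forall v, nu k * S <= bw obs q.+1 P k v <= S.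
Proof.
move=> /subnK <-; elim: (k - q)%N => [|j [S [S0 hS]]].
  by exists 1; split => // v; rewrite add0n bw_lt // mulr1 nu_le1 lexx.
rewrite addSn bw_S; last by rewrite ltnS leq_addl.
exists (RI P (bw obs q.+1 P (j + q))); split; last by move=> v; apply: fwd_bounds; exact: good_bw.
apply: lt_le_trans (RI_lb P _ _ (good_bm (good_bw _ _ P _)) (fun v => proj1 (andP (hS v)))).
by rewrite mulr_gt0.
Qed.

Lemma RI_Kshift P f i x w c : good f ->
  RI P (fun u => f u * (K i x u w - c)) = RI P (fun u => f u * K i x u w) - c * RI P f.
Proof.
move=> gf; have bf := good_bm gf.
transitivity (RI P (fun u => f u * K i x u w - c * f u)).
  by apply: RI_ext => u; rewrite mulrBr [c * _]mulrC.
rewrite RIB ?RIZl //; last exact: bmM (bm_cst _) bf.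
by apply: bmM => //; exact: bmK1.
Qed.

Lemma forget P obs q k0 : (0 < q)%N -> (q <= k0)%N ->
  exists m M, [/\ nu q <= m, m <= M, M <= 1,
    M - m <= \prod_(q.+1 <= i < k0.+1) (1 - nu i) &
    forall v, m * bw obs q.+1 P k0 v <= bw obs q P k0 v <= M * bw obs q.+1 P k0 v].
Proof.
move=> q0 /subnK <-; elim: (k0 - q)%N => [|j [m [M [hm mM M1 hMm hv]]]].
  exists (nu q), 1; split => //.
  - exact: nu_le1.
  - by rewrite big_geq // lerBlDr lerDl ltW.
  move=> v; rewrite add0n (bw_lt _ _ _ _ (ltnSn q)) mulr1 mul1r.
  case: q q0 => [//|q'] _; rewrite bw_S // (bw_lt _ _ _ _ (ltnSn q')).
  have := fwd_bounds P (fun _ => 1) q'.+1 (obs q'.+1) v good1 => /andP[h1 h2].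
  rewrite RI_cst mulr1 in h1 h2.
  by apply/andP; split; [exact: h1 | exact: h2].
set k := (j + q)%N.
have qk : (q <= k)%N by rewrite leq_addl.
set Fa := bw obs q P k; set Fb := bw obs q.+1 P k.
have gFa : good Fa by exact: good_bw.
have gFb : good Fb by exact: good_bw.
have [S [S0 hS]] := bw_bounds P obs q k qk.
set A := RI P Fa; set L := RI P Fb.
have L0 : 0 < L.
  apply: lt_le_trans (RI_lb P _ _ (good_bm gFb) (fun v => proj1 (andP (hS v)))).
  by rewrite mulr_gt0.
have hmL : m * L <= A.
  rewrite -RIZl; last exact: good_bm.
  apply: RI_le => [| |u]; [exact: bmM (bm_cst _) (good_bm gFb) | exact: good_bm | by case/andP: (hv u)].
have hML : A <= M * L.
  rewrite -RIZl; last exact: good_bm.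
  apply: RI_le => [| |u]; [exact: good_bm | exact: bmM (bm_cst _) (good_bm gFb) | by case/andP: (hv u)].
set c := A / L.
have Ac : A = c * L by rewrite /c -mulrA mulVf ?mulr1 // gt_eqF.
have mc : m <= c by rewrite /c ler_pdivlMr.
have cM : c <= M by rewrite /c ler_pdivrMr.
set nv := nu k.+1.
have nv0 : 0 <= nv by exact: ltW (nu_pos _).
have nv1 : nv <= 1 by apply: nu_le1.
exists (c + (1 - nv) * (m - c)), (c + (1 - nv) * (M - c)); split.
- by apply: le_trans hm _; nra.
- nra.
- nra.
- rewrite addSn big_nat_recr /=; last by rewrite ltnS.
  have h1 : 0 <= 1 - nv by rewrite subr_ge0.
  have := ler_wpM2r h1 hMm; rewrite -/k -/nv; nra.
move=> w; rewrite addSn !bw_S ?ltnS //; last exact: ltnW.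
rewrite -/k -/Fa -/Fb.
set Xw := RI P (fun u => Fa u * K k.+1 (obs k.+1) u w).
set Yw := RI P (fun u => Fb u * K k.+1 (obs k.+1) u w).
have /andP[_ YL] := fwd_bounds P Fb k.+1 (obs k.+1) w gFb.
rewrite -/L -/Yw in YL.
have Y0 : 0 <= Yw by apply: RI_ge0 => u; apply: mulr_ge0; [case/andP: (proj2 gFb u) | exact: K0].
have bKs : forall f, good f -> bm (fun u => f u * (K k.+1 (obs k.+1) u w - nv)).
  by move=> f gf; apply: bmM; [exact: good_bm | apply: bmB; [exact: bmK1 | exact: bm_cst]].
have Kn : forall u, 0 <= K k.+1 (obs k.+1) u w - nv by move=> u; rewrite subr_ge0 Knu.
have hup : Xw - nv * A <= M * (Yw - nv * L).
  rewrite -!RI_Kshift // -RIZl; last exact: bKs.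
  apply: RI_le => [| |u]; [exact: bKs | exact: bmM (bm_cst _) (bKs _ gFb) |].
  by rewrite mulrA ler_wpM2r //; case/andP: (hv u).
have hlo : m * (Yw - nv * L) <= Xw - nv * A.
  rewrite -!RI_Kshift // -RIZl; last exact: bKs.
  apply: RI_le => [| |u]; [exact: bmM (bm_cst _) (bKs _ gFb) | exact: bKs |].
  by rewrite mulrA ler_wpM2r //; case/andP: (hv u).
rewrite Ac in hup hlo.
have H1 := mulr_ge0 (mulr_ge0 nv0 (_ : 0 <= M - c)) (_ : 0 <= L - Yw).
have H2 := mulr_ge0 (mulr_ge0 nv0 (_ : 0 <= c - m)) (_ : 0 <= L - Yw).
move: H1 H2 => /(_ ltac:(lra)) /(_ ltac:(lra)) H1 /(_ ltac:(lra)) /(_ ltac:(lra)) H2.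
apply/andP; split; nra.
Qed.

Lemma step_bound P P' t obs n q k : (0 < q)%N -> (q <= k)%N -> tvnorm P P' = t%:E ->
  `|ln (RI P (fun v => bw obs q P k v * gw P' obs (n - k) k v) /
        RI P (fun v => bw obs q.+1 P k v * gw P' obs (n - k) k v))
   - ln (RI P' (fun v => bw obs q P k v * gw P' obs (n - k) k v) /
        RI P' (fun v => bw obs q.+1 P k v * gw P' obs (n - k) k v))|
  <= (nu q * nu k * nu k.+1)^-1 * \prod_(q.+1 <= i < k.+1) (1 - nu i) * t.
Proof.
move=> q0 qk tvE.
have t0 : 0 <= t by rewrite -lee_fin -tvE tv_ge0.
set G := gw P' obs (n - k) k; set Fa := bw obs q P k; set Fb := bw obs q.+1 P k.
have gG : good G by exact: good_gw.
have gFa : good Fa by exact: good_bw.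
have gFb : good Fb by exact: good_bw.
have G0 : forall v, 0 <= G v by move=> v; case/andP: (proj2 gG v).
have Fb0 : forall v, 0 <= Fb v by move=> v; case/andP: (proj2 gFb v).
have [m [M [hm mM M1 hMm hv]]] := forget P obs q k q0 qk.
have [S [S0 hS]] := bw_bounds P obs q k qk.
have [T [T0 hT]] := gw_bounds P' obs (n - k) k.
have nq := nu_pos q; have nk := nu_pos k; have nk1 := nu_pos k.+1.
have bFbG : bm (fun v => Fb v * G v) by apply: bmM; exact: good_bm.
have bFaG : bm (fun v => Fa v * G v) by apply: bmM; exact: good_bm.
set e := nu k * S * (nu k.+1 * T).
have e0 : 0 < e by rewrite !mulr_gt0.
have Dlb : forall rho : probability V R, e <= RI rho (fun v => Fb v * G v).
  move=> rho; apply: RI_lb => // v; apply: ler_pM.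
  - by rewrite mulr_ge0 // ltW.
  - by rewrite mulr_ge0 // ltW.
  - by case/andP: (hS v).
  - by case/andP: (hT v).
have NmM : forall rho : probability V R,
    m * RI rho (fun v => Fb v * G v) <= RI rho (fun v => Fa v * G v) <=
    M * RI rho (fun v => Fb v * G v).
  move=> rho; rewrite -!RIZl //; apply/andP; split.
    apply: RI_le => [| |v]; [exact: bmM (bm_cst _) bFbG | exact: bFaG |].
    by rewrite mulrA ler_wpM2r //; case/andP: (hv v).
  apply: RI_le => [| |v]; [exact: bFaG | exact: bmM (bm_cst _) bFbG |].
  by rewrite mulrA ler_wpM2r //; case/andP: (hv v).
set D := fun rho : probability V R => RI rho (fun v => Fb v * G v).
set N := fun rho : probability V R => RI rho (fun v => Fa v * G v).
have D0 : forall rho, 0 < D rho by move=> rho; apply: lt_le_trans (Dlb rho).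
have Rhm : forall rho, m <= N rho / D rho <= M.
  move=> rho; have /andP[h1 h2] := NmM rho.
  by rewrite ler_pdivlMr // ler_pdivrMr // h1 h2.
rewrite -/(N P) -/(N P') -/(D P) -/(D P').
set c := N P' / D P'.
have /andP[mc cM] : m <= c <= M := Rhm P'.
pose phi := fun v => (Fa v - c * Fb v) * G v.
have bphi : bm phi.
  apply: bmM; last exact: good_bm.
  by apply: bmB; [exact: good_bm | exact: bmM (bm_cst _) (good_bm gFb)].
have phiE : forall rho : probability V R, RI rho phi = N rho - c * D rho.
  move=> rho; rewrite /phi /N /D -RIZl // -RIB //; last exact: bmM (bm_cst _) bFbG.
  by apply: RI_ext => v; rewrite mulrBl mulrA.
have phiB : forall v, `|phi v| <= (M - m) * S * T.
  move=> v; rewrite /phi normrM (ger0_norm (G0 v)).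
  have /andP[hv1 hv2] : m * Fb v <= Fa v <= M * Fb v := hv v.
  have /andP[_ hS2] : nu k * S <= Fb v <= S := hS v.
  have /andP[_ hT2] : nu k.+1 * T <= G v <= T := hT v.
  have h1 : `|Fa v - c * Fb v| <= (M - m) * Fb v.
    rewrite ler_norml; have := Fb0 v => Fb0v.
    have := mulr_ge0 (_ : 0 <= c - m) Fb0v; have := mulr_ge0 (_ : 0 <= M - c) Fb0v.
    move=> /(_ ltac:(lra)) H1 /(_ ltac:(lra)) H2.
    apply/andP; split; nra.
  apply: (ler_pM (normr_ge0 _) (G0 v)) => //.
  apply: le_trans h1 _; apply: ler_wpM2l => //; lra.
have tvb := tv_abs _ _ _ _ _ tvE (proj1 bphi) phiB.
rewrite !phiE (_ : N P' - c * D P' = 0) ?subr0 in tvb; last first.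
  by rewrite /c mulrAC -mulrA mulfV ?mulr1 ?subrr // gt_eqF.
have h2 : `|N P / D P - c| <= (M - m) * t / (nu k * nu k.+1).
  have -> : N P / D P - c = (N P - c * D P) / D P.
    by rewrite /c; field; rewrite !gt_eqF ?D0.
  rewrite normrM (gtr0_norm (_ : 0 < (D P)^-1)) ?invr_gt0 //.
  apply: le_trans (_ : (M - m) * S * T * t / e <= _).
    apply: ler_pM => //; first by rewrite invr_ge0 ltW.
    by rewrite lef_pV2 ?posrE ?D0 //; exact: Dlb.
  rewrite /e le_eqVlt; apply/orP; left; apply/eqP; field.
  by rewrite !gt_eqF.
have hq : nu q <= m by [].
have h1' : `|ln (N P / D P) - ln c| <= `|N P / D P - c| / nu q.
  apply: ln_lip => //; [exact: le_trans hq (proj1 (andP (Rhm P))) | exact: le_trans hq mc].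
apply: le_trans h1' _.
apply: le_trans (_ : (M - m) * t / (nu k * nu k.+1) / nu q <= _).
  by apply: ler_wpM2r; [rewrite invr_ge0 ltW | exact: h2].
have h3 : (M - m) * t <= \prod_(q.+1 <= i < k.+1) (1 - nu i) * t by apply: ler_wpM2r.
rewrite [X in _ <= X](_ : _ = \prod_(q.+1 <= i < k.+1) (1 - nu i) * t / (nu k * nu k.+1) / nu q).
  apply: ler_wpM2r; first by rewrite invr_ge0 ltW.
  by apply: ler_wpM2r => //; rewrite invr_ge0 mulr_ge0 // ltW.
by field; rewrite !gt_eqF.
Qed.

Lemma chain P' obs n a q : (q <= n)%N -> (a <= q.+1)%N ->
  RI P' (bw obs a P' n) = RI P' (fun v => bw obs a P' q v * gw P' obs (n - q) q v).
Proof.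
move=> qn aq.
have H : forall j, (q + j <= n)%N ->
    RI P' (fun v => bw obs a P' (q + j) v * gw P' obs (n - (q + j)) (q + j) v) =
    RI P' (fun v => bw obs a P' q v * gw P' obs (n - q) q v).
  elim => [|j IH] qjn; first by rewrite addn0.
  have qjn' : (q + j < n)%N by rewrite -addnS.
  rewrite -IH; last exact: ltnW.
  rewrite addnS -(hyb_step P' P' obs n a (q + j)) //.
  by apply: leq_trans aq _; rewrite ltnS leq_addr.
have := H (n - q)%N; rewrite subnKC // subnn => <- //.
by apply: RI_ext => v; rewrite mulr1.
Qed.

Lemma bwq P obs q v : (0 < q)%N -> bw obs q P q v = RI P (fun u => K q (obs q) u v).
Proof.
case: q => [//|q'] _; rewrite bw_S // (bw_lt _ _ _ _ (ltnSn q')).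
by apply: RI_ext => u; rewrite mul1r.
Qed.

Lemma q0_bound P P' t obs n q : (0 < q)%N -> tvnorm P P' = t%:E ->
  `|ln (RI P' (fun v => bw obs q P q v * gw P' obs (n - q) q v) / RI P' (gw P' obs (n - q) q))
    - ln (RI P' (fun v => bw obs q P' q v * gw P' obs (n - q) q v) / RI P' (gw P' obs (n - q) q))|
  <= t / nu q.
Proof.
move=> q0 tvE.
have t0 : 0 <= t by rewrite -lee_fin -tvE tv_ge0.
set G := gw P' obs (n - q) q.
have gG : good G by exact: good_gw.
have G0 : forall v, 0 <= G v by move=> v; case/andP: (proj2 gG v).
have [T [T0 hT]] := gw_bounds P' obs (n - q) q.
have nq := nu_pos q.
have D0 : 0 < RI P' G.
  apply: lt_le_trans (RI_lb P' _ _ (good_bm gG) (fun v => proj1 (andP (hT v)))).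
  by rewrite mulr_gt0.
have lbq : forall (rho : probability V R) v, nu q <= bw obs q rho q v.
  move=> rho v; rewrite bwq //; apply: RI_lb; first exact: bmK1.
  by move=> u; exact: Knu.
have bG := good_bm gG.
have lbN : forall rho : probability V R, nu q <= RI P' (fun v => bw obs q rho q v * G v) / RI P' G.
  move=> rho; rewrite ler_pdivlMr // -RIZl //; apply: RI_le => [| |v].
  - exact: bmM (bm_cst _) bG.
  - by apply: bmM => //; exact/good_bm/good_bw.
  - by rewrite ler_wpM2r.
apply: le_trans (ln_lip _ _ _ nq (lbN P) (lbN P')) _.
apply: ler_wpM2r; first by rewrite invr_ge0 ltW.
rewrite -mulrBl -RIB; [|by apply: bmM => //; exact/good_bm/good_bw..].
rewrite normrM (gtr0_norm (_ : 0 < (RI P' G)^-1)) ?invr_gt0 // ler_pdivrMr //.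
rewrite -RIZl //; apply: RI_abs_le => [||v].
- by apply: bmB; apply: bmM => //; exact/good_bm/good_bw.
- exact: bmM (bm_cst _) bG.
rewrite -mulrBl normrM (ger0_norm (G0 v)) ler_wpM2r // !bwq //.
have := tv_abs P P' t (fun u => K q (obs q) u v) 1 tvE (proj1 (bmK1 _ _ _)).
by rewrite mul1r; apply => u; rewrite ger0_norm.
Qed.

Lemma main_ineq P P' n obs q : (0 < q)%N -> (q <= n)%N ->
  (`| ln (condP P n K obs q) - ln (condP P' n K obs q) |%:E <=
   (2 * \sum_(0 <= l < n.+2 - q)
          ((nu q * nu (q + l)%N.-1 * nu (q + l)%N)^-1
           * \prod_(q.+1 <= k < q + l) (1 - nu k)))%:E
   * tvnorm P P')%E.
Proof.
move=> q0 qn.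
pose term l := (nu q * nu (q + l)%N.-1 * nu (q + l)%N)^-1 * \prod_(q.+1 <= k < q + l) (1 - nu k).
rewrite -/(term _).
have term_ge0 : forall l, 0 <= term l.
  move=> l; apply: mulr_ge0.
    by rewrite invr_ge0 ltW // !mulr_gt0.
  by apply: prodr_ge0 => k _; rewrite subr_ge0 nu_le1.
have term0 : term 0%N = (nu q * nu q.-1 * nu q)^-1.
  by rewrite /term addn0 big_geq // mulr1.
have nq := nu_pos q.
have S0 : 0 < 2 * \sum_(0 <= l < n.+2 - q) term l.
  rewrite mulr_gt0 // big_ltn; last by rewrite subn_gt0 ltnS ltnW.
  apply: lt_le_trans (_ : 0 < term 0%N) _.
    by rewrite term0 invr_gt0 !mulr_gt0.
  by rewrite lerDl; apply: sumr_ge0 => l _.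
case E: (tvnorm P P') => [t| |]; last first.
- by have := tv_ge0 P P'; rewrite E.
- by rewrite gt0_muley ?lte_fin // leey.
have t0 : 0 <= t by rewrite -lee_fin -E tv_ge0.
rewrite /condP !margP_bw /=.
pose Rh k (rho : probability V R) :=
  RI rho (fun v => bw obs q P k v * gw P' obs (n - k) k v) /
  RI rho (fun v => bw obs q.+1 P k v * gw P' obs (n - k) k v).
have E1 : RI P (bw obs q P n) / RI P (bw obs q.+1 P n) = Rh n P.
  rewrite /Rh subnn; congr (_ / _); apply: RI_ext => v; by rewrite mulr1.
have E3 : RI P' (bw obs q P' n) / RI P' (bw obs q.+1 P' n) =
    RI P' (fun v => bw obs q P' q v * gw P' obs (n - q) q v) / RI P' (gw P' obs (n - q) q).
  rewrite (chain P' obs n q q) // (chain P' obs n q.+1 q) //; congr (_ / _).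
  by apply: RI_ext => v; rewrite (bw_lt _ _ _ _ (ltnSn q)) mul1r.
have E4 : Rh q P' =
    RI P' (fun v => bw obs q P q v * gw P' obs (n - q) q v) / RI P' (gw P' obs (n - q) q).
  rewrite /Rh; congr (_ / _).
  by apply: RI_ext => v; rewrite (bw_lt _ _ _ _ (ltnSn q)) mul1r.
have q0b : `|ln (Rh q P') - ln (RI P' (bw obs q P' n) / RI P' (bw obs q.+1 P' n))| <= t / nu q.
  by rewrite E3 E4; apply: q0_bound.
have Estep : forall k, (q <= k)%N -> (k < n)%N -> Rh k.+1 P' = Rh k P.
  move=> k qk kn; rewrite /Rh.
  rewrite -(hyb_step P P' obs n q k) //; last by apply: leq_trans qk _.
  by rewrite -(hyb_step P P' obs n q.+1 k).
set c' := RI P' (bw obs q P' n) / RI P' (bw obs q.+1 P' n).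
have tele : forall j, (q + j <= n)%N ->
    `|ln (Rh (q + j)%N P) - ln c'| <= (\sum_(0 <= l < j.+2) term l) * t.
  elim => [|j IH] qjn.
    rewrite addn0; apply: le_trans (ler_distD (ln (Rh q P')) _ _) _.
    rewrite !big_nat_recr //= big_geq // add0r mulrDl [X in _ <= X]addrC.
    apply: lerD.
      have := step_bound P P' t obs n q q q0 (leqnn q) E.
      by rewrite /term addn1 /=.
    apply: le_trans q0b _; rewrite term0 mulrC ler_wpM2r //.
    rewrite lef_pV2 ?posrE ?mulr_gt0 // -mulrA; apply: ler_piMr; first exact: ltW.
    by rewrite mulr_ile1 ?nu_le1 // ltW.
  have qjn' : (q + j < n)%N by rewrite -addnS.
  apply: le_trans (ler_distD (ln (Rh (q + j.+1)%N P')) _ _) _.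
  rewrite big_nat_recr //= mulrDl [X in _ <= X]addrC; apply: lerD.
    have := step_bound P P' t obs n q (q + j.+1) q0 (leq_addr _ _) E.
    by rewrite /term [(q + j.+2)%N]addnS /=.
  rewrite addnS Estep ?leq_addr //; apply: IH; exact: ltnW.
have := tele (n - q)%N; rewrite subnKC // -E1 => /(_ (leqnn n)) H.
rewrite -EFinM lee_fin; apply: le_trans H _.
have -> : ((n - q).+2 = n.+2 - q)%N by rewrite -!subSn // ltnW.
rewrite ler_wpM2r // ler_peMl //; last by rewrite ler1n.
by apply: sumr_ge0 => l _.
Qed.

End Disc.

Theorem lemma7 (d : measure_display) (V : measurableType d) (R : realType)
    (X : finType) (n : nat) (K : nat -> X -> V -> V -> R) (nu : nat -> R)
    (hn : (1 <= n)%N)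
    (Kmeas : forall i x, measurable_fun setT (fun p : V * V => K i x p.1 p.2))
    (Kprob : forall i v w, \sum_(x : X) K i x v w = 1)
    (nu_pos : forall i, 0 < nu i)
    (H2 : forall i x v w, nu i <= K i x v w <= 1)
    (pi pi' : probability V R) (q : nat) (hq : (1 <= q <= n)%N)
    (obs : nat -> X) :
  (`| ln (condP pi n K obs q) - ln (condP pi' n K obs q) |%:E <=
   (2 * \sum_(0 <= l < n.+2 - q)
          ((nu q * nu (q + l)%N.-1 * nu (q + l)%N)^-1
           * \prod_(q.+1 <= k < q + l) (1 - nu k)))%:E
   * tvnorm pi pi')%E.
Proof.
have Knu : forall i x v w, nu i <= K i x v w by move=> i x v w; case/andP: (H2 i x v w).
have K1 : forall i x v w, K i x v w <= 1 by move=> i x v w; case/andP: (H2 i x v w).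
have K0 : forall i x v w, 0 <= K i x v w.
  by move=> i x v w; apply: le_trans (ltW (nu_pos i)) (Knu i x v w).
case/andP: hq => q0 qn.
exact: (main_ineq K Kmeas K0 K1 Kprob nu nu_pos Knu pi pi' n obs q q0 qn).
Qed.
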